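(* For every $v\in\,]-\infty,-\mu_\kappa[\,\cap\mathbb Z_{d,\ell}$ one has $\epsilon(v)=-\mu_\kappa-v>0$, and $\epsilon(-\mu_\kappa)=\min(\mathcal V_1\setminus\{-\mu_\kappa\})+\mu_\kappa$ (with $\min\emptyset=+\infty$).
   Context: Let $\mathbf K$ be a field and $\ell\geq 2$ an integer. Let $L=a_n\phi_\ell^n+\dots+a_0$ with $n\geq1$, $a_i\in\mathbf K[z]$, $a_0a_n\neq0$, where $\phi_\ell(f)(z)=f(z^\ell)$ acting on Hahn series with coefficients in $\mathbf K$ and value group $\mathbb Q$. Let $\mathcal P(L)=\{(\ell^i,j): 0\le i\le n,\ j\in\operatorname{supp} a_i\}$. The Newton polygon of $L$ is the convex hull of $\{(\ell^i,j): 0\le i\le n,\ j\geq\operatorname{val} a_i\}\subset\mathbb R^2$; its non-vertical edges have slopes $\mu_1<\dots<\mu_\kappa$, $\mathcal S(L)=\{\mu_1,\dots,\mu_\kappa\}$. Let $d\geq1$ be a common multiple of the denominators of the $\mu_k$ and $\mathbb Z_{d,\ell}=\bigcup_{i\geq0}\frac{1}{d\ell^i}\mathbb Z$. Define $\Psi(v)=\{v\ell^i+j:(\ell^i,j)\in\mathcal P(L)\}$, $\pi(q)=\max\{(q-j)/\ell^i:(\ell^i,j)\in\mathcal P(L)\}$. Let $\mathcal V_0=-\mathcal S(L)$, $\mathcal V_{i+1}=\bigcup_{v\in\mathcal V_i}\pi(\Psi(v))$, $\mathcal V=\bigcup_{i\ge0}\mathcal V_i$ (a well-ordered set). For $v\in\mathbb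 Q$ let $\epsilon(v)=\min\{w\in\mathcal V: w>v\}-v\in\mathbb Q_{>0}\cup\{+\infty\}$ ($+\infty$ if this set is empty). *)

(* Defs.v *)
From HB Require Import structures.
From mathcomp Require Import all_boot all_order all_algebra.
Set Implicit Arguments. Unset Strict Implicit. Unset Printing Implicit Defensive.
Import Order.TTheory GRing.Theory Num.Theory.
Local Open Scope ring_scope.

(* The operator L = a_n phi^n + ... + a_0 is given by its coefficients
   a : nat -> {poly K}, only a i for i <= n being relevant. *)

Definition pval (K : fieldType) (p : {poly K}) : nat := find (fun c => c != 0) p.

Section NewtonData.
Variables (K : fieldType) (l n : nat) (a : nat -> {poly K}).

(* (i,j) codes the point (l^i, j) of P(L): 0 <= i <= n, j in supp a_i *)
Definition inP (i j : nat) : Prop := (i <= n)%N /\ (a i)`_j != 0.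

(* mu is the slope of a non-vertical edge of the Newton polygon, i.e. of a
   lower supporting line of the convex hull of
   {(l^i, j) : 0 <= i <= n, j >= val a_i} meeting it in two distinct points
   (necessarily of the form (l^i, val a_i), (l^k, val a_k), i < k). *)
Definition is_slope (mu : rat) : Prop :=
  exists i k : nat, [/\ (i < k <= n)%N, a i != 0, a k != 0,
    mu = ((pval (a k))%:R - (pval (a i))%:R) / ((l ^ k)%:R - (l ^ i)%:R)
  & forall m : nat, (m <= n)%N -> a m != 0 ->
      (pval (a i))%:R + mu * ((l ^ m)%:R - (l ^ i)%:R) <= (pval (a m))%:R].

Definition is_pi (q w : rat) : Prop :=
  (exists i j, inP i j /\ w = (q - j%:R) / (l ^ i)%:R) /\
  (forall i j, inP i j -> (q - j%:R) / (l ^ i)%:R <= w).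

Fixpoint Vk (k : nat) (w : rat) : Prop :=
  match k with
  | 0 => exists mu, is_slope mu /\ w = - mu
  | k'.+1 => exists v, Vk k' v /\
      exists i j, inP i j /\ is_pi (v * (l ^ i)%:R + j%:R) w
  end.

Definition V (w : rat) : Prop := exists k, Vk k w.

(* e = epsilon(v), None standing for +oo *)
Definition is_eps (v : rat) (e : option rat) : Prop :=
  match e with
  | Some x => [/\ V (v + x), v < v + x & forall w, V w -> v < w -> v + x <= w]
  | None => forall w, V w -> ~ (v < w)
  end.

End NewtonData.

(* m = min of the set P, None standing for min of the empty set = +oo *)
Definition is_min_opt (P : rat -> Prop) (m : option rat) : Prop :=
  match m with
  | Some x => P x /\ forall y, P y -> x <= y
  | None => forall y, ~ P y
  end.

Definition in_Zdl (d l : nat) (v : rat) : Prop :=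
  exists i : nat, ((d * l ^ i)%:R * v) \is a Num.int.

(* Main.v *)
Require Import Defs.
From HB Require Import structures.
From mathcomp Require Import all_boot all_order all_algebra.
From mathcomp Require Import ring lra.
From Stdlib Require Import Classical.
Import Order.TTheory GRing.Theory Num.Theory.
Local Open Scope ring_scope.

Lemma ex_min_nat (P : nat -> Prop) :
  (exists N, P N) -> exists N, P N /\ forall M, P M -> (N <= M)%N.
Proof.
move=> [N PN].
suff H : forall B N, (N <= B)%N -> P N -> exists N, P N /\ forall M, P M -> (N <= M)%N.
  exact: (H N N (leqnn N) PN).
elim=> [|B IH] {PN}N hN PN.
  by exists N; split=> // M _; move: hN; rewrite leqn0 => /eqP->.
case: (classic (exists M, (M < N)%N /\ P M)) => [[M [hM PM]]|nM].
  by apply: (IH M) => //; rewrite -ltnS (leq_trans hM hN).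
exists N; split=> // M PM; rewrite leqNgt; apply/negP => hM; apply: nM.
by exists M.
Qed.

Section Proof.
Variables (K : fieldType) (l n : nat) (a : nat -> {poly K}) (muk : rat).
Hypothesis hl : (2 <= l)%N.
Hypothesis hmuk : is_slope l n a muk.
Hypothesis hmax : forall mu, is_slope l n a mu -> mu <= muk.

Lemma lpos i : 0 < (l ^ i)%:R :> rat.
Proof. by rewrite ltr0n expn_gt0 (leq_trans _ hl). Qed.

Lemma pi_ge {q w i j} : is_pi l n a q w -> inP n a i j -> (q - j%:R) / (l ^ i)%:R <= w.
Proof. by move=> [_ H] /H. Qed.

Lemma Vk_lb {k w} : Vk l n a k w -> - muk <= w.
Proof.
elim: k w => [|k IH] w /=.
  by move=> [mu [/hmax hm ->]]; rewrite lerN2.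
move=> [v [/IH hv [i [j [hij hpi]]]]].
apply: (le_trans hv); have := pi_ge hpi hij.
by rewrite addrK mulfK // gt_eqF // lpos.
Qed.

Lemma pval_ok (p : {poly K}) : p != 0 -> p`_(pval p) != 0.
Proof.
move=> hp; rewrite /pval; apply: (@nth_find _ 0 (fun c => c != 0)).
apply/hasP; exists (lead_coef p); last by rewrite lead_coef_eq0.
have sz : (0 < size p)%N by rewrite size_poly_gt0.
by rewrite /lead_coef; apply: mem_nth; rewrite prednK.
Qed.

Lemma pval_le (p : {poly K}) j : p`_j != 0 -> (pval p <= j)%N.
Proof.
move=> hj; rewrite leqNgt; apply/negP => hlt.
by have := before_find 0 hlt; rewrite hj.
Qed.

Lemma V0_V1 {mu} : is_slope l n a mu -> Vk l n a 1 (- mu).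
Proof.
move=> hs; have [i [k [/andP [hik hkn] hai hak hmu hsl]]] := hs.
exists (- mu); split; first by exists mu.
exists i, (pval (a i)); split.
  by split; [apply: leq_trans (ltnW hik) hkn | apply: pval_ok].
split.
  exists i, (pval (a i)); split.
    by split; [apply: leq_trans (ltnW hik) hkn | apply: pval_ok].
  by rewrite addrK mulfK // gt_eqF // lpos.
move=> i' j' [hi' hj'].
have ha' : a i' != 0 by apply: contraNneq hj' => ->; rewrite coef0.
have h1 := hsl i' hi' ha'.
have h2 : (pval (a i'))%:R <= j'%:R :> rat by rewrite ler_nat pval_le.
rewrite ler_pdivrMr ?lpos //.
have := lpos i'; have := lpos i; lra.
Qed.

Lemma V_S {k w} : Vk l n a k w -> - muk < w ->
  exists w', [/\ Vk l n a 1 w', w' <> - muk & w' <= w].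
Proof.
elim: k w => [|k IH] w.
  move=> [mu [hs ->]] hlt; exists (- mu); split => //.
    exact: V0_V1.
  by move=> e; rewrite e ltxx in hlt.
move=> [v [hv [i [j [hij hpi]]]]] hlt.
have := Vk_lb hv; rewrite le_eqVlt => /orP [/eqP e|hv'].
  exists w; split => //.
    exists v; split; first by rewrite -e; exists muk.
    by exists i, j.
  by move=> e'; rewrite e' ltxx in hlt.
have [w' [h1 h2 h3]] := IH v hv hv'.
exists w'; split => //; apply: (le_trans h3).
by have := pi_ge hpi hij; rewrite addrK mulfK // gt_eqF // lpos.
Qed.

End Proof.

Theorem mainTheorem12 (K : fieldType) (l n : nat) (a : nat -> {poly K})
  (muk : rat) (d : nat) :
  (2 <= l)%N -> (1 <= n)%N -> a 0%N != 0 -> a n != 0 ->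
  is_slope l n a muk -> (forall mu, is_slope l n a mu -> mu <= muk) ->
  (0 < d)%N -> (forall mu, is_slope l n a mu -> (d%:R * mu) \is a Num.int) ->
  (forall v : rat, v < - muk -> in_Zdl d l v ->
     0 < - muk - v /\ is_eps l n a v (Some (- muk - v))) /\
  (exists m : option rat,
     is_min_opt (fun w => Vk l n a 1 w /\ w <> - muk) m /\
     is_eps l n a (- muk) (omap (fun x => x + muk) m)).
Proof.
move=> hl hn ha0 han hmuk hmax hd hint; split.
  move=> v hv _; split; first by rewrite subr_gt0.
  have e : v + (- muk - v) = - muk by ring.
  rewrite /is_eps e; split.
  - by exists 0%N; exists muk.
  - by [].
  - move=> w [k hk] _.
    exact: Vk_lb hk.
pose S := fun w => Vk l n a 1 w /\ w <> - muk.
case: (classic (exists w, S w)) => [[w0 Sw0]|nS]; last first.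
  exists None; split.
    by move=> y Sy; apply: nS; exists y.
  move=> w [k hk] hlt; have [w' [h1 h2 _]] := @V_S K l n a muk hl hmuk hmax _ _ hk hlt.
  by apply: nS; exists w'.
pose D : rat := (d * l ^ n)%:R.
have Dpos : 0 < D by rewrite ltr0n muln_gt0 hd expn_gt0 (leq_trans _ hl).
have Sint : forall w, S w -> exists N : nat, D * (w + muk) = N%:R.
  move=> w [hw hne].
  have hge := @Vk_lb K l n a muk hl hmax _ _ hw.
  apply/natrP; rewrite natrEint; apply/andP; split; last first.
    by apply: mulr_ge0; [exact: ltW | rewrite -lerBlDr sub0r].
  rewrite mulrDr; apply: rpredD; last first.
    rewrite /D natrM mulrAC; apply: rpredM; last exact: rpred_nat.
    exact: hint.
  move: hw => [v [[mu [hs ->]] [i [j [hij [[i' [j' [[hi' _] ->]] _]]]]]]].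
  have hm := hint mu hs.
  have -> : D * ((- mu * (l ^ i)%:R + j%:R - j'%:R) / (l ^ i')%:R) =
     (l ^ (n - i'))%:R * (- (d%:R * mu) * (l ^ i)%:R + (d * j)%:R - (d * j')%:R).
    rewrite /D -(subnK hi') expnD !natrM.
    have := @lpos l hl i'; move=> /gt_eqF /negbT hz.
    rewrite (subnK hi').
    by field.
  apply: rpredM; first exact: rpred_nat.
  apply: rpredB; last exact: rpred_nat.
  apply: rpredD; last exact: rpred_nat.
  by apply: rpredM; [rewrite rpredN | exact: rpred_nat].
have [N [[w [Sw hwN]] hmin]] :=
  @ex_min_nat (fun N => exists w, S w /\ D * (w + muk) = N%:R)
    (let: ex_intro N hN := Sint w0 Sw0 in ex_intro _ N (ex_intro _ w0 (conj Sw0 hN))).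
have wmin : forall y, S y -> w <= y.
  move=> y Sy; have [M hM] := Sint y Sy.
  have := hmin M (ex_intro _ y (conj Sy hM)); rewrite -(ler_nat rat) -hM -hwN.
  by rewrite ler_pM2l // lerD2r.
exists (Some w); split; first by split.
have hwgt : - muk < w.
  by have := @Vk_lb K l n a muk hl hmax _ _ (proj1 Sw); rewrite le_eqVlt eq_sym => /orP [/eqP e|//]; case: Sw.
rewrite /is_eps /omap /obind /oapp; have -> : - muk + (w + muk) = w by ring.
split.
- by exists 1%N; case: Sw.
- exact: hwgt.
- move=> w1 [k hk] hlt; have [w' [h1 h2 h3]] := @V_S K l n a muk hl hmuk hmax _ _ hk hlt.
  exact: le_trans (wmin w' (conj h1 h2)) h3.
Qed.
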